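(* Let $\boldsymbol\zeta=(\mathbf z^{(\mathsf e,j)})_{(\mathsf e,j)\in\mathcal E\times[K]}$ be a restriction sequence for $\mathsf{DIHP}(G,n,\alpha,K)$ that is not cyclic, and let $V_1,\dots,V_t\subseteq\mathcal V\times[n]$ be the connected components of $H_{\boldsymbol\zeta}$ with at least two vertices. Then (1) $\mathbb E_x[g_{\boldsymbol\zeta}(x)]=1$ for $x$ uniform in $\mathbb Z_N^{\mathcal V\times[n]}$; and (2) for any $b\in\mathbb Z_N^{\mathcal V\times[n]}$, $\widehat{g_{\boldsymbol\zeta}}(b)\ne0$ only if $\mathrm{supp}(b)\subseteq\bigcup_{i\in[t]}V_i$ and $|\mathrm{supp}(b)\cap V_i|\ne1$ for every $i\in[t]$.
   Context: $N\ge2$, $\mathbb Z_N=\mathbb Z/N\mathbb Z$. $G=(\mathcal V,\mathcal E,N,(\mu_{\mathsf e}))$ is a distribution-labeled $k$-graph: finite set $\mathcal V$, finite multiset $\mathcal E$ of ordered $k$-tuples of distinct vertices, and one-wise independent distributions $\mu_{\mathsf e}$ on $\mathbb Z_N^k$ (each coordinate marginal uniform), with pmf $\mu_{\mathsf e}(\cdot)$. For $\mathsf e=(\mathsf v_1,\dots,\mathsf v_k)$, $\mathcal U_{\mathsf e}=(\{\mathsf v_1\}\times[n],\dots,\{\mathsf v_k\}\times[n])$ and $\prod\mathcal U_{\mathsf e}$ is the product of these sets. A restriction sequence is $\boldsymbol\zeta=(\mathbf z^{(\mathsf e,j)})_{(\mathsf e,j)\in\mathcal E\times[K]}$ where each $\mathbf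 z^{(\mathsf e,j)}$ is a map $\prod\mathcal U_{\mathsf e}\to\mathbb Z_N^k\cup\{\mathtt{nil}\}$ whose support $\{e:\mathbf z(e)\ne\mathtt{nil}\}$ is a matching (pairwise vertex-disjoint tuples) of size at most $\alpha n$. $H_{\boldsymbol\zeta}$ is the $k$-uniform hypergraph on $\mathcal V\times[n]$ with edge set $\bigcup\mathrm{supp}\mathbf z^{(\mathsf e,j)}$. $\boldsymbol\zeta$ is cyclic if the supports are not pairwise disjoint or some $\ell\ge1$ edges of $H_{\boldsymbol\zeta}$ together cover at most $\ell(k-1)$ vertices. For $e=(v_1,\dots,v_k)$, $x_{|e}=(x_{v_1},\dots,x_{v_k})$. $g_{\boldsymbol\zeta}(x)=\prod_{(\mathsf e,j)}\prod_{e\in\mathrm{supp}\mathbf z^{(\mathsf e,j)}}N^k\mu_{\mathsf e}(x_{|e}-\mathbf z^{(\mathsf e,j)}(e))$. Fourier: $\chi_b(x)=\exp(\frac{2\pi\mathrm i}N\sum_vb_vx_v)$, $\widehat g(b)=\mathbb E_x[g(x)\overline{\chi_b(x)}]$. *)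

(* Defs.v *)
From HB Require Import structures.
From mathcomp Require Import all_boot all_order all_algebra.
Set Implicit Arguments. Unset Strict Implicit. Unset Printing Implicit Defensive.
Import Order.TTheory GRing.Theory Num.Theory.
Local Open Scope ring_scope.

Section DIHP.
Variables (C : numClosedFieldType) (V E : finType) (k n K N : nat).
(* the multiset of k-tuples: edge occurrences indexed by E *)
Variable ev : E -> k.-tuple V.

(* the hyperedge of U_e selected by c : [k] -> [n]: ((v_1,c_1),...,(v_k,c_k)) *)
Definition hedge (e : E) (c : {ffun 'I_k -> 'I_n}) (i : 'I_k) : V * 'I_n :=
  (tnth (ev e) i, c i).
Definition hverts (e : E) (c : {ffun 'I_k -> 'I_n}) : {set V * 'I_n} :=
  [set hedge e c i | i : 'I_k].

Definition dist_labeled (mu : E -> {ffun 'I_k -> 'Z_N} -> C) : Prop :=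
  [/\ forall e y, 0 <= mu e y,
      forall e, \sum_y mu e y = 1
    & forall e (i : 'I_k) (a : 'Z_N), \sum_(y : {ffun 'I_k -> 'Z_N} | y i == a) mu e y = (N%:R)^-1].

Definition Occ := (E * 'I_K * {ffun 'I_k -> 'I_n})%type.

Variable z : E -> 'I_K -> {ffun 'I_k -> 'I_n} -> option {ffun 'I_k -> 'Z_N}.

Definition insupp (o : Occ) : bool := z o.1.1 o.1.2 o.2 != None.
Definition overts (o : Occ) : {set V * 'I_n} := hverts o.1.1 o.2.

Definition is_restriction_seq (alpha : C) : Prop :=
  forall e j,
    (forall c c', z e j c != None -> z e j c' != None -> c != c' ->
       [disjoint hverts e c & hverts e c'])
    /\ (#|[set c | z e j c != None]|%:R <= alpha * n%:R).

(* cyclic restriction sequence; H_zeta is viewed with its edges counted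
   by occurrence *)
Definition cyclic : bool :=
  [exists o1 : Occ, exists o2 : Occ,
     [&& insupp o1, insupp o2, o1.1 != o2.1 &
         [forall i, hedge o1.1.1 o1.2 i == hedge o2.1.1 o2.2 i]]]
  || [exists S : {set Occ},
       [&& S != set0, S \subset [set o | insupp o] &
           (#|\bigcup_(o in S) overts o| <= #|S| * k.-1)%N]].

Definition hadj : rel (V * 'I_n) :=
  fun u w => [exists o : Occ, [&& insupp o, u \in overts o & w \in overts o]].
Definition hcomp (u : V * 'I_n) : {set V * 'I_n} := [set w | connect hadj u w].

Variable mu : E -> {ffun 'I_k -> 'Z_N} -> C.

Definition gzeta (x : {ffun V * 'I_n -> 'Z_N}) : C :=
  \prod_(o : Occ)
    match z o.1.1 o.1.2 o.2 with
    | Some a => (N ^ k)%:R * mu o.1.1 [ffun i => x (hedge o.1.1 o.2 i) - a i]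
    | None => 1
    end.

End DIHP.

Section Fourier.
Variables (C : numClosedFieldType) (T : finType) (N : nat).

(* omega = exp(2 pi i / N): N.-root (-1) is the N-th root of -1 of minimal
   argument, i.e. exp(i pi / N) *)
Definition omega : C := (N.-root (-1)) ^+ 2.

Definition chi (b x : {ffun T -> 'Z_N}) : C :=
  omega ^+ (\sum_v (val (b v) * val (x v)))%N.

Definition expect (f : {ffun T -> 'Z_N} -> C) : C :=
  (#|{: {ffun T -> 'Z_N}}|%:R)^-1 * \sum_x f x.

Definition fourier (f : {ffun T -> 'Z_N} -> C) (b : {ffun T -> 'Z_N}) : C :=
  expect (fun x => f x * (chi b x)^*).
End Fourier.

(* Main.v *)
Require Import Defs.
From HB Require Import structures.
From mathcomp Require Import all_boot all_order all_algebra.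
From mathcomp Require Import ring zify.
Import Order.TTheory GRing.Theory Num.Theory.
Local Open Scope ring_scope.

Section Roots.
Variable C : numClosedFieldType.

Lemma logder (rs : seq C) (a : C) : a \notin rs ->
  (\sum_(y <- rs) (a - y)^-1) * (\prod_(y <- rs) (a - y))
   = (\prod_(y <- rs) ('X - y%:P))^`().[a].
Proof.
elim: rs => [|y rs IH]; first by rewrite !big_nil derivC horner0 mul0r.
rewrite inE negb_or => /andP[ay ars].
have ay0 : a - y != 0 by rewrite subr_eq0.
rewrite !big_cons derivM derivXsubC mul1r hornerD hornerM !hornerE -IH //.
rewrite horner_prod.
under [in RHS]eq_bigr do rewrite !hornerE.
set S := \sum_(j <- rs) _; set P := \prod_(j <- rs) _.
rewrite /=.
rewrite mulrDl mulrDl mulVf // mul1r; congr (_ + _).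
by rewrite mulrCA mulrA.
Qed.

Lemma Re1 : 'Re (1 : C) = 1. Proof. by apply/Creal_ReP; exact: rpred1. Qed.
Lemma Im1 : 'Im (1 : C) = 0. Proof. by apply/Creal_ImP; exact: rpred1. Qed.

Lemma norm1B (y : C) : `|y| = 1 -> `|1 - y| ^+ 2 = 2 - 2 * 'Re y.
Proof.
move=> ny; have h := normC2_Re_Im y; rewrite ny expr1n in h.
rewrite normC2_Re_Im !raddfB /= Re1 Im1 sub0r sqrrN.
transitivity (1 - 2 * 'Re y + ('Re y ^+ 2 + 'Im y ^+ 2)); first by ring.
by rewrite -h; ring.
Qed.

Lemma Re_inv1B (y : C) : `|y| = 1 -> y != 1 -> 'Re ((1 - y)^-1) = 2^-1.
Proof.
move=> ny y1; rewrite -div1r Re_div norm1B // Re1 Im1 mul0r addr0 mul1r.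
rewrite raddfB /= Re1.
have h : 1 - 'Re y != 0.
  apply: contraNneq y1 => h0.
  have : `|1 - y| ^+ 2 = 0 by rewrite norm1B //; move/eqP: h0; rewrite subr_eq0 => /eqP <-; rewrite mulr1 subrr.
  by move/eqP; rewrite expf_eq0 /= normr_eq0 subr_eq0 eq_sym.
rewrite [X in _ / X](_ : _ = 2 * (1 - 'Re y)); last by ring.
by rewrite invfM mulrCA mulfV // mulr1.
Qed.

Lemma Im_inv1B (y : C) : 'Im ((1 - y)^-1) = 'Im y / `|1 - y| ^+ 2.
Proof.
rewrite -div1r Im_div Im1 mulr0 sub0r Re1 mul1r raddfB /= Im1 sub0r opprK //.
Qed.


Lemma tau_le (y z : C) : `|y| = 1 -> `|z| = 1 -> y != 1 -> z != 1 ->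
  0 <= 'Im y -> 0 <= 'Im z -> 'Re y <= 'Re z ->
  'Im ((1 - y)^-1) <= 'Im ((1 - z)^-1).
Proof.
move=> ny nz y1 z1 Iy Iz Ryz.
have dpos (u : C) : u != 1 -> 0 < `|1 - u| ^+ 2.
  by move=> u1; rewrite exprn_gt0 // normr_gt0 subr_eq0 eq_sym.
rewrite !Im_inv1B ler_pdivrMr ?dpos // mulrAC ler_pdivlMr ?dpos //.
rewrite !norm1B //.
have hy := normC2_Re_Im y; rewrite ny expr1n in hy.
have hz := normC2_Re_Im z; rewrite nz expr1n in hz.
have Ry1 : 'Re y <= 1 by rewrite -ny; exact: (leif_Re_Creal y).1.
have Rz1 : 'Re z <= 1 by rewrite -nz; exact: (leif_Re_Creal z).1.
rewrite -ler_sqr; last 2 first.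
- by rewrite qualifE /= mulr_ge0 // subr_ge0 -{2}(mulr1 2) ler_pM2l // ltr0n.
- by rewrite qualifE /= mulr_ge0 // subr_ge0 -{2}(mulr1 2) ler_pM2l // ltr0n.
rewrite -subr_ge0.
have -> : ('Im z * (2 - 2 * 'Re y)) ^+ 2 - ('Im y * (2 - 2 * 'Re z)) ^+ 2
  = 8 * ((1 - 'Re y) * (1 - 'Re z) * ('Re z - 'Re y)).
  have ey : 'Im y ^+ 2 = 1 - 'Re y ^+ 2 by rewrite hy addrC addKr.
  have ez : 'Im z ^+ 2 = 1 - 'Re z ^+ 2 by rewrite hz addrC addKr.
  rewrite !exprMn ey ez; ring.
by rewrite mulr_ge0 ?ler0n // !mulr_ge0 // subr_ge0.
Qed.


Lemma root_Re_gt n (z : C) : (1 < n)%N -> `|z| = 1 -> 0 <= 'Im z -> z != 1 ->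
  'Re z < 'Re (n.-root z).
Proof.
move=> n1 nz Iz z1; have n0 : (0 < n)%N by apply: ltnW.
rewrite real_ltNge ?Creal_Re //; apply/negP => Hle.
have [rs Drs] := closed_field_poly_normal ('X^n - z%:P : {poly C}).
rewrite (monicP (monicXnsubC z n0)) scale1r in Drs.
have szrs : size rs = n.
  by apply: succn_inj; rewrite -(size_prod_XsubC rs id) -Drs size_XnsubC.
have rootrs y : y \in rs -> y ^+ n = z.
  move=> yrs; have : root ('X^n - z%:P) y by rewrite Drs root_prod_XsubC.
  by rewrite rootE !hornerE subr_eq0 => /eqP.
have z0 : z != 0 by rewrite -normr_eq0 nz oner_eq0.
have ny y : y \in rs -> `|y| = 1.
  move=> yrs; apply/eqP; rewrite -(pexpr_eq1 n0) ?normr_ge0 // -normrX rootrs //.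
  by rewrite nz.
have y1 y : y \in rs -> y != 1.
  by move=> yrs; apply: contra_neq z1 => y1; rewrite -(rootrs y) // y1 expr1n.
have tle y : y \in rs -> 'Im ((1 - y)^-1) <= 'Im ((1 - z)^-1).
  move=> yrs; have [Iy|Iy] := real_ge0P (Creal_Im y).
    apply: tau_le => //; try by [apply: ny | apply: y1].
    apply: le_trans Hle; exact: rootC_Re_max n0 (rootrs y yrs) Iy.
  apply: le_trans (_ : 0 <= _).
    rewrite Im_inv1B pmulr_lle0 ?invr_gt0 ?exprn_gt0 ?normr_gt0 ?subr_eq0 1?eq_sym ?y1 //.
    exact: ltW.
  rewrite Im_inv1B mulr_ge0 // invr_ge0 exprn_ge0 //.
have sum1 : \sum_(y <- rs) (1 - y)^-1 = n%:R / (1 - z).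
  have := @logder rs 1.
  rewrite -Drs derivB derivXn derivC subr0 hornerMn hornerXn expr1n.
  rewrite (_ : \prod_(y <- rs) (1 - y) = 1 - z); last first.
    rewrite (_ : 1 - z = ('X^n - z%:P).[1]); last by rewrite !hornerE expr1n.
    by rewrite Drs horner_prod; apply: eq_bigr => y _; rewrite !hornerE.
  have nr : 1 \notin rs by apply/negP => /y1; rewrite eqxx.
  have zz : 1 - z != 0 by rewrite subr_eq0 eq_sym.
  by move=> /(_ nr) <-; rewrite mulfK.
have sc (c : C) (s : seq C) : \sum_(y <- s) c = c *+ size s.
  by elim: s => [|a s IH]; rewrite ?big_nil ?big_cons ?IH ?mulrS.
have sumz : \sum_(y <- rs) ('Im ((1 - z)^-1) - 'Im ((1 - y)^-1)) = 0.
  rewrite sumrB sc szrs -raddf_sum sum1 mulr_natl raddfMn /= subrr //.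
have eqall : forall y, y \in rs -> y = z.
  move=> y yrs.
  have hge u : u \in rs -> 0 <= 'Im ((1 - z)^-1) - 'Im ((1 - u)^-1).
    by move=> urs; rewrite subr_ge0 tle.
  have := @psumr_eq0 C C rs (fun y => y \in rs) _ hge.
  rewrite -big_seq sumz eqxx => /esym /allP /(_ y yrs); rewrite yrs /=.
  rewrite subr_eq0 => /eqP eI.
  have : (1 - y)^-1 = (1 - z)^-1.
    by rewrite [LHS]Crect [RHS]Crect (@Re_inv1B y (ny _ yrs) (y1 _ yrs)) (@Re_inv1B z nz z1) eI.
  by move/invr_inj/addrI/oppr_inj.
have := @coefPn_prod_XsubC C rs; rewrite szrs -Drs => /(_ (negbT (gtn_eqF n0))).
rewrite coefB coefXn coefC.
have -> : (n.-1 == n) = false by apply/negbTE/eqP; lia.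
have -> : (n.-1 == 0%N) = false by apply/negbTE/eqP; lia.
rewrite subr0 (eq_big_seq (fun _ => z)) // sc szrs => /eqP.
rewrite eq_sym oppr_eq0 mulrn_eq0 (negbTE z0) orbF => /eqP n00.
by move: n0; rewrite n00.
Qed.


Lemma N1neq1 : (-1 : C) != 1.
Proof. by rewrite lt_eqF // (lt_trans (ltrN10 _) ltr01). Qed.

Lemma omega_prim N : (1 < N)%N ->
  ((N.-root (-1 : C)) ^+ 2) ^+ N = 1 /\ forall m, (0 < m)%N -> (m < N)%N -> ((N.-root (-1 : C)) ^+ 2) ^+ m != 1.
Proof.
move=> N1; have N0 : (0 < N)%N by apply: ltnW.
set r := N.-root (-1 : C).
have rN : r ^+ N = -1 by rewrite /r rootCK.
have wN : (r ^+ 2) ^+ N = 1 by rewrite exprAC rN sqrrN expr1n.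
split => // m m0 mN; apply/negP => /eqP wm.
have exP : exists d, (0 < d)%N && ((r ^+ 2) ^+ d == 1) by exists m; rewrite m0 wm eqxx.
have [d /andP[d0 /eqP wd] dmin] := find_ex_minn exP.
have dm : (d <= m)%N by apply: dmin; rewrite m0 wm eqxx.
have dN : (d %| N)%N.
  rewrite /dvdn; apply/negPn/negP => Nd.
  have : (d <= N %% d)%N by apply: dmin; rewrite lt0n Nd /= expr_mod // wN.
  by rewrite leqNgt ltn_pmod.
set q := (N %/ d)%N.
have Nqd : N = (q * d)%N by rewrite /q divnK.
have q1 : (1 < q)%N.
  rewrite ltnNge; apply/negP => q1; move: (leq_trans dm (ltnW mN)).
  have : (q * d <= d)%N by rewrite -{2}(mul1n d) leq_mul2r q1 orbT.
  rewrite -Nqd => Nd dN'. have Ndd : N = d by apply/eqP; rewrite eqn_leq Nd dN'.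
  by move: mN; rewrite Ndd ltnNge dm.
have rd : r ^+ d = -1.
  have : (r ^+ d) ^+ 2 == 1 by rewrite exprAC wd.
  rewrite sqrf_eq1 => /orP[/eqP rd1|/eqP //].
  by move: rN; rewrite Nqd mulnC exprM rd1 expr1n => /eqP; rewrite eq_sym (negbTE N1neq1).
set y := q.-root r.
have yN : y ^+ N = -1 by rewrite Nqd exprM /y rootCK ?rd // ltnW.
have Ir : 0 <= 'Im r by apply: Im_rootC_ge0.
have nr : `|r| = 1.
  apply/eqP; rewrite -(pexpr_eq1 N0) ?normr_ge0 // -normrX rN normrN normr1 //.
have r1 : r != 1.
  by apply: contra_neq N1neq1 => r1; rewrite -rN r1 expr1n.
have lt1 := @root_Re_gt q r q1 nr Ir r1.
have le1 : 'Re y <= 'Re r := rootC_Re_max N0 yN (Im_rootC_ge0 _ q1).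
by have := lt_le_trans lt1 le1; rewrite ltxx.
Qed.

End Roots.

Section Main.
Variables (C : numClosedFieldType) (V E : finType) (k n K N : nat).
Variable ev : E -> k.-tuple V.
Variable mu : E -> {ffun 'I_k -> 'Z_N} -> C.
Variable z : E -> 'I_K -> {ffun 'I_k -> 'I_n} -> option {ffun 'I_k -> 'Z_N}.
Hypothesis N1 : (1 < N)%N.
Hypothesis evu : forall e, uniq (ev e).
Hypothesis dl : dist_labeled mu.
Hypothesis ncyc : ~~ cyclic ev z.

Local Notation OT := (Occ E k n K).
Local Notation VT := (V * 'I_n)%type.
Local Notation XT := {ffun VT -> 'Z_N}.

Definition fac (o : OT) (x : XT) : C :=
  match z o.1.1 o.1.2 o.2 with
  | Some a => (N ^ k)%:R * mu o.1.1 [ffun i => x (hedge ev o.1.1 o.2 i) - a i]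
  | None => 1
  end.
Definition supp : {set OT} := [set o | insupp z o].

Lemma gzetaE (x : XT) : gzeta ev z mu x = \prod_(o in supp) fac o x.
Proof.
rewrite big_mkcond; apply: eq_bigr => o _; rewrite inE /insupp /fac.
by case: (z _ _ _).
Qed.

Lemma hedge_inj e (c : {ffun 'I_k -> 'I_n}) : injective (hedge ev e c).
Proof. by move=> i j [/(tuple_uniqP _ (evu e))]. Qed.

Lemma card_overts (o : OT) : #|overts ev o| = k.
Proof. by rewrite card_imset ?card_ord //; exact: hedge_inj. Qed.

Lemma hedge_in (o : OT) i : hedge ev o.1.1 o.2 i \in overts ev o.
Proof. exact: imset_f. Qed.

Lemma count_nc (S : {set OT}) : S \subset supp -> S != set0 ->
  (#|S| * k.-1 < #|\bigcup_(o in S) overts ev o|)%N.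
Proof.
move=> Ss S0; move: ncyc; rewrite /cyclic negb_or => /andP[_ /existsPn /(_ S)].
by rewrite S0 Ss /= -ltnNge.
Qed.

Lemma fac_local (o : OT) (x x' : XT) : (forall v, v \in overts ev o -> x v = x' v) ->
  fac o x = fac o x'.
Proof.
move=> H; rewrite /fac; case: (z _ _ _) => // a.
congr (_ * mu _ _); apply/ffunP => i; rewrite !ffunE H //; exact: hedge_in.
Qed.


Definition Lsh (o : OT) (y : {ffun 'I_k -> 'Z_N}) : XT :=
  [ffun v => if [pick i | hedge ev o.1.1 o.2 i == v] is Some i then y i else 0].

Lemma Lsh_hedge (o : OT) (y : {ffun 'I_k -> 'Z_N}) i : Lsh o y (hedge ev o.1.1 o.2 i) = y i.
Proof.
rewrite ffunE; case: pickP => [j /eqP /hedge_inj -> // | /(_ i)].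
by rewrite eqxx.
Qed.

Lemma Lsh_out (o : OT) (y : {ffun 'I_k -> 'Z_N}) i0 v : y i0 = 0 ->
  (forall i, i != i0 -> hedge ev o.1.1 o.2 i != v) -> Lsh o y v = 0.
Proof.
move=> y0 H; rewrite ffunE; case: pickP => // j /eqP hj.
case: (eqVneq j i0) => [-> // | ji0].
by move: (H j ji0); rewrite hj eqxx.
Qed.

Lemma addXE (x x' : XT) v : (x + x') v = x v + x' v.
Proof. by rewrite ffunE. Qed.

Lemma cardZN : #|{: 'Z_N}| = N.
Proof. by rewrite card_ord Zp_cast. Qed.

Lemma cardY (i0 : 'I_k) :
  N%:R * \sum_(y : {ffun 'I_k -> 'Z_N}) ((y i0 == 0)%:R : C) = (N ^ k)%:R.
Proof.
have e1 : \sum_(t : 'Z_N) \sum_(y : {ffun 'I_k -> 'Z_N}) ((y i0 == t)%:R : C)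
          = (N ^ k)%:R.
  rewrite exchange_big /=.
  rewrite (eq_bigr (fun _ => 1)) => [|y _]; last first.
    rewrite (eq_bigr (fun t => if t == y i0 then 1 else 0)) => [|t _]; last first.
      by rewrite eq_sym; case: (_ == _).
    by rewrite -big_mkcond big_pred1_eq.
  by rewrite sumr_const card_ffun cardZN card_ord.
have e2 t : \sum_(y : {ffun 'I_k -> 'Z_N}) ((y i0 == t)%:R : C)
          = \sum_(y : {ffun 'I_k -> 'Z_N}) ((y i0 == 0)%:R : C).
  rewrite (reindex_inj (addIr [ffun=> t])) /=; apply: eq_bigr => y _.
  by rewrite ffunE ffunE -{2}(add0r t) (inj_eq (addIr t)).
by rewrite -e1 (eq_bigr _ (fun t _ => e2 t)) sumr_const cardZN mulr_natl.
Qed.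


Lemma step (o : OT) (i0 : 'I_k) (A : XT -> C) : o \in supp ->
  (forall x (y : {ffun 'I_k -> 'Z_N}), y i0 = 0 -> A (x + Lsh o y) = A x) ->
  \sum_x fac o x * A x = \sum_x A x.
Proof.
move=> os HA.
have [dpos dsum dmarg] := dl.
set S := \sum_x fac o x * A x.
have hS (y : {ffun 'I_k -> 'Z_N}) : y i0 = 0 ->
    S = \sum_(x : XT) fac o (x + Lsh o y) * A x.
  move=> y0.
  have inj : injective (fun x : XT => x + Lsh o y) by apply: addIr.
  rewrite /S (reindex_inj inj) /=.
  by apply: eq_bigr => x _; rewrite HA.
have hin (x : XT) : \sum_(y : {ffun 'I_k -> 'Z_N})
    ((y i0 == 0)%:R * fac o (x + Lsh o y)) = (N ^ k)%:R / N%:R.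
  move: os; rewrite inE /insupp /fac; case: (z _ _ _) => [a|] // _.
  set dx : {ffun 'I_k -> 'Z_N} := [ffun i => x (hedge ev o.1.1 o.2 i) - a i].
  rewrite -(dmarg o.1.1 i0 (dx i0)) mulr_sumr [RHS]big_mkcond /=.
  rewrite [RHS](reindex_inj (addrI dx)) /=; apply: eq_bigr => y _.
  rewrite ffunE -{2}(addr0 (dx i0)) (inj_eq (addrI _)).
  case: (y i0 == 0); rewrite ?mul0r // mul1r; congr (_ * mu _ _).
  apply/ffunP => i; rewrite [LHS]ffunE addXE Lsh_hedge [RHS]ffunE ffunE addrAC //.
have cY := cardY i0.
set T := \sum_(y : {ffun 'I_k -> 'Z_N}) ((y i0 == 0)%:R : C) in cY.
have N0 : (N%:R : C) != 0 by rewrite pnatr_eq0 -lt0n ltnW.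
have TE : T = (N ^ k)%:R / N%:R by rewrite -cY [_ * T]mulrC mulfK.
have T0 : T != 0.
  by rewrite TE mulf_neq0 ?invr_eq0 // pnatr_eq0 expn_eq0 negb_and -lt0n ltnW.
have : T * S = T * \sum_x A x.
  rewrite /T mulr_suml.
  transitivity (\sum_(y : {ffun 'I_k -> 'Z_N}) (y i0 == 0)%:R *
                   \sum_(x : XT) fac o (x + Lsh o y) * A x).
    apply: eq_bigr => y0 _; case: (eqVneq (y0 i0) 0) => [/hS <- //|_].
    by rewrite !mul0r.
  under eq_bigr do rewrite mulr_sumr.
  rewrite exchange_big /= -/T TE mulr_sumr.
  apply: eq_bigr => x1 _.
  rewrite -(hin x1) mulr_suml; apply: eq_bigr => y _; ring.
by move/(mulfI T0).
Qed.


Lemma card_sum (T : finType) (A : {pred T}) : #|A| = (\sum_v (v \in A))%N.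
Proof.
by rewrite -sum1_card big_mkcond /=; apply: eq_bigr => v _; case: (v \in A).
Qed.

Lemma sum_ge_term (I : finType) (P : pred I) (f : I -> nat) i :
  P i -> (f i <= \sum_(j | P j) f j)%N.
Proof. by move=> Pi; rewrite (bigD1 i) //= leq_addr. Qed.

Lemma leaf (F : {set OT}) (W : {set VT}) : F \subset supp -> F != set0 ->
  (#|W| <= 1)%N ->
  exists o, o \in F /\ exists i0 : 'I_k, forall i, i != i0 ->
    hedge ev o.1.1 o.2 i \notin (\bigcup_(o' in F :\ o) overts ev o') :|: W.
Proof.
move=> FS F0 W1.
have cnt := count_nc F FS F0.
set U := \bigcup_(o in F) overts ev o in cnt.
have k0 : (0 < k)%N.
  have : (0 < #|U|)%N by apply: leq_ltn_trans cnt.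
  case/card_gt0P => v /bigcupP [o _ /imsetP [i _ _]].
  exact: leq_ltn_trans (leq0n i) (ltn_ord i).
pose d v := (\sum_(o in F) (v \in overts ev o))%N.
pose phi v := ((1 < d v)%N || (v \in W)).
pose T (o : OT) := [set v in overts ev o | phi v].
suffices : [exists o in F, [exists i0 : 'I_k, [forall i, (i != i0) ==>
    (hedge ev o.1.1 o.2 i \notin (\bigcup_(o' in F :\ o) overts ev o') :|: W)]]].
  case/existsP => o /andP[oF /existsP [i0 /forallP H]].
  exists o; split => //; exists i0 => i ii0.
  by move/implyP: (H i); apply.
apply: contraT => H.
have inT o i : o \in F ->
    hedge ev o.1.1 o.2 i \in (\bigcup_(o' in F :\ o) overts ev o') :|: W ->
    hedge ev o.1.1 o.2 i \in T o.
  move=> oF; rewrite !inE hedge_in /= /phi => /orP [/bigcupP [o' o'F vo'] | ->];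
    last by rewrite orbT.
  apply/orP; left; rewrite /d (bigD1 o) //= hedge_in add1n ltnS.
  move: o'F; rewrite !inE => /andP [o'o o'F].
  by rewrite (bigD1 o') /= ?o'o ?o'F // vo'.
have T2 o : o \in F -> (1 < #|T o|)%N.
  move=> oF.
  have ex (j : 'I_k) : exists i, (i != j) && (hedge ev o.1.1 o.2 i \in T o).
    apply/existsP; apply: contraNT H => /existsPn H'.
    apply/existsP; exists o; rewrite oF /=; apply/existsP; exists j.
    apply/forallP => i; apply/implyP => ij; apply/negP => hi.
    by move: (H' i); rewrite ij /= inT.
  have [i1 /andP [_ i1T]] := ex (Ordinal k0).
  have [i2 /andP [i21 i2T]] := ex i1.
  apply/card_gt1P; exists (hedge ev o.1.1 o.2 i2), (hedge ev o.1.1 o.2 i1).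
  by split => //; apply: contra i21 => /eqP /hedge_inj ->.
have cA : (2 * #|F| <= \sum_(o in F) #|T o|)%N.
  rewrite mulnC -sum_nat_const; apply: leq_sum => o oF; exact: T2.
have cB : (\sum_(o in F) #|T o| = \sum_v d v * phi v)%N.
  transitivity (\sum_(o in F) \sum_v ((v \in overts ev o) * phi v))%N.
    apply: eq_bigr => o _; rewrite card_sum; apply: eq_bigr => v _.
    by rewrite !inE mulnb.
  rewrite exchange_big /=; apply: eq_bigr => v _.
  by rewrite /d big_distrl.
have cC : (\sum_v d v * phi v <= 2 * \sum_v (d v).-1 + \sum_v (v \in W))%N.
  rewrite big_distrr -big_split /=; apply: leq_sum => v _.
  rewrite /phi; case: (v \in W); case: (d v) => [|[|m]] //=; lia.
have cD : (\sum_v (v \in W) = #|W|)%N by rewrite card_sum.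
have cE : (\sum_v (d v).-1 + #|U| = \sum_v d v)%N.
  rewrite card_sum -big_split /=; apply: eq_bigr => v _.
  have -> : (v \in U) = (0 < d v)%N.
    rewrite lt0n sum_nat_eq0 negb_forall; apply/bigcupP/existsP.
      by case=> o oF vo; exists o; rewrite negb_imply oF /= eqb0 negbK vo.
    by case=> o; rewrite negb_imply eqb0 negbK => /andP[oF vo]; exists o.
  by case: (d v) => [|m] //=; rewrite addn1.
have cF : (\sum_v d v = #|F| * k)%N.
  rewrite exchange_big /= -sum_nat_const; apply: eq_bigr => o _.
  by rewrite -card_sum card_overts.
have kk : (#|F| * k = #|F| * k.-1 + #|F|)%N.
  by rewrite -mulnSr prednK.
have F1 : (0 < #|F|)%N by rewrite card_gt0.
move: cA cB cC cD cE cF kk cnt W1 F1.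
set a := (#|F| * k.-1)%N; set P := (#|F| * k)%N.
set s1 := (\sum_(o in F) #|T o|)%N; set s2 := (\sum_v d v * phi v)%N.
set s3 := (\sum_v (d v).-1)%N; set s4 := (\sum_v (v \in W))%N.
set s5 := (\sum_v d v)%N.
lia.
Qed.


Lemma peel (W D : {set VT}) (h : XT -> C) : (#|W| <= 1)%N ->
  (forall x x' : XT, (forall v, v \in D -> x v = x' v) -> h x = h x') ->
  forall F : {set OT}, F \subset supp ->
  (forall o v, o \in F -> v \in overts ev o -> v \in D -> v \in W) ->
  \sum_(x : XT) (\prod_(o in F) fac o x) * h x = \sum_(x : XT) h x.
Proof.
move=> W1 hD F.
move: {2}#|F| (leqnn #|F|) => m; elim: m F => [|m IH] F Fm FS FD.
  have -> : F = set0 by apply/eqP; rewrite -cards_eq0 -leqn0.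
  by apply: eq_bigr => x _; rewrite big_set0 mul1r.
case: (eqVneq F set0) => [-> | F0].
  by apply: eq_bigr => x _; rewrite big_set0 mul1r.
have [o [oF [i0 Hi]]] := leaf F W FS F0 W1.
have oS : o \in supp by apply: (subsetP FS).
rewrite -(IH (F :\ o)); first last.
- by move=> o' v; rewrite inE => /andP[_ o'F]; exact: FD.
- by apply: subset_trans FS; apply: subD1set.
- by move: Fm; rewrite (cardsD1 o F) oF add1n ltnS.
under eq_bigr do rewrite (big_setD1 o oF) -mulrA.
apply: (step o i0 (fun x => \prod_(o' in F :\ o) fac o' x * h x)) => // x y y0.
congr (_ * _).
  apply: eq_bigr => o' o'F; apply: fac_local => v vo'.
  rewrite addXE (Lsh_out o y i0 v y0) ?addr0 // => i ii0.
  apply: contraNneq (Hi i ii0) => ->; rewrite inE; apply/orP; left.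
  by apply/bigcupP; exists o'.
apply: hD => v vD; rewrite addXE (Lsh_out o y i0 v y0) ?addr0 // => i ii0.
apply: contraNneq (Hi i ii0) => hv; rewrite inE; apply/orP; right.
by apply: (FD o) => //; rewrite ?hedge_in // hv.
Qed.


Lemma part1 : expect (gzeta ev z mu) = 1.
Proof.
rewrite /expect.
have := @peel set0 set0 (fun _ => 1) _ _ supp (subxx _) _.
rewrite cards0 => /(_ isT) /(_ (fun _ _ _ => erefl)).
have h0 : forall (o : OT) v, o \in supp -> v \in overts ev o -> v \in (set0 : {set VT}) -> v \in (set0 : {set VT}) by [].
move=> /(_ h0).
under eq_bigr do rewrite mulr1.
rewrite (eq_bigr _ (fun x _ => gzetaE x)) => ->.
rewrite sumr_const mulVf // pnatr_eq0 card_ffun cardZN expn_eq0 negb_and.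
by rewrite -lt0n ltnW.
Qed.


Lemma hadj_sym : symmetric (hadj ev z).
Proof.
move=> u w; rewrite /hadj; apply/existsP/existsP => [] [o /and3P[a b c]];
  by exists o; rewrite a b c.
Qed.

Lemma comp_closed (w : VT) (o : OT) v : o \in supp -> v \in overts ev o ->
  v \in hcomp ev z w -> overts ev o \subset hcomp ev z w.
Proof.
move=> oS vo; rewrite inE => vw; apply/subsetP => u uo; rewrite inE.
apply: connect_trans vw (connect1 _); apply/existsP; exists o.
by move: oS; rewrite inE => ->; rewrite vo uo.
Qed.

Lemma chi_shift (b x : XT) (w : VT) :
  chi C b (x + [ffun v => if v == w then 1 else 0]) =
  chi C b x * omega C N ^+ val (b w).
Proof.
have [wN _] := omega_prim C N N1.
rewrite -/(omega C N) in wN.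
have wN' : omega C N ^+ (Zp_trunc N).+2 = 1 by rewrite Zp_cast.
rewrite /chi (bigD1 w) //= [X in _ = _ ^+ X * _](bigD1 w) //=.
rewrite (eq_bigr (fun v => val (b v) * val (x v))%N); last first.
  by move=> v /negbTE vw; rewrite addXE ffunE vw addr0.
rewrite addXE ffunE eqxx !exprD.
rewrite mulrAC; congr (_ * _).
rewrite !exprM.
have hm : (omega C N ^+ val (b w)) ^+ (Zp_trunc N).+2 = 1 by rewrite exprAC wN' expr1n.
have -> : val (x w + 1)%R = ((val (x w) + 1) %% (Zp_trunc N).+2)%N by [].
by rewrite (expr_mod _ hm) exprD expr1.
Qed.


Lemma single (b : XT) (w : VT) : b w != 0 ->
  (forall v, v \in hcomp ev z w -> v != w -> b v = 0) ->
  fourier (gzeta ev z mu) b = 0.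
Proof.
move=> bw0 bHc.
rewrite /fourier /expect.
suff -> : \sum_(x : XT) gzeta ev z mu x * (chi C b x)^* = 0 by rewrite mulr0.
set Hc := hcomp ev z w.
set B := [set o : OT | overts ev o \subset Hc].
set D := [set v : VT | (v \notin Hc) || (v == w)].
have wHc : w \in Hc by rewrite inE connect0.
have Fr_out o : o \in supp :\: B -> forall v, v \in overts ev o -> v \notin Hc.
  move=> /setDP [oS oB] v vo; apply/negP => vH; move/negP: oB; apply.
  by rewrite inE; exact: comp_closed vo vH.
under eq_bigr do rewrite gzetaE (big_setID B) /= -mulrA.
rewrite (@peel [set w] D (fun x => \prod_(o in supp :\: B) fac o x * (chi C b x)^*)).
- set P := fun x : XT => \prod_(o in supp :\: B) fac o x.
  set del : XT := [ffun v => if v == w then 1 else 0].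
  set zeta := omega C N ^+ val (b w).
  set S := \sum_(x : XT) _.
  have PS (x : XT) : P (x + del) = P x.
    apply: eq_bigr => o oFr; apply: fac_local => v vo.
    rewrite addXE ffunE; case: eqP => [vw|]; last by rewrite addr0.
    by move: (Fr_out o oFr v vo); rewrite vw wHc.
  have SS : S = S * zeta^*.
    have inj : injective (fun x : XT => x + del) by apply: addIr.
    rewrite {1}/S (reindex_inj inj) /= mulr_suml; apply: eq_bigr => x _.
    by rewrite -/(P (x + del)) PS chi_shift rmorphM mulrA.
  have z1 : zeta^* != 1.
    have bw00 := bw0.
    apply: contraNneq bw00 => zc.
    have zeta1 : zeta = 1 by rewrite -[zeta]conjCK zc rmorph1.
    have [_ prim] := omega_prim C N N1.
    have vb0 : (0 < val (b w))%N.
      by rewrite lt0n; apply: contraNneq bw0 => h; rewrite -val_eqE h.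
    have vbN : (val (b w) < N)%N by apply: leq_trans (ltn_ord (b w)) _; rewrite Zp_cast.
    by move: (prim _ vb0 vbN); rewrite -/(omega C N) -/zeta zeta1 eqxx.
  apply/eqP; move/eqP: SS; rewrite -subr_eq0 -{1}(mulr1 S) -mulrBr mulf_eq0.
  by rewrite subr_eq0 [1 == _]eq_sym (negbTE z1) orbF.
- by rewrite cards1.
- move=> x x' H; congr (_ * _).
    apply: eq_bigr => o oFr; apply: fac_local => v vo; apply: H.
    by rewrite inE (Fr_out o oFr v vo).
  congr (_^*); rewrite /chi; congr (_ ^+ _); apply: eq_bigr => v _.
  case: (boolP (v \in D)) => [vD|]; first by rewrite H.
  rewrite inE negb_or negbK => /andP[vH vw].
  by rewrite (bHc v vH vw).
- exact: subsetIl.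
- move=> o v /setIP [_]; rewrite inE => /subsetP oB vo.
  rewrite [v \in D]inE => /orP [vH|/eqP ->]; last by rewrite set11.
  by rewrite (oB v vo) in vH.
Qed.


Lemma main_sec : expect (gzeta ev z mu) = 1 /\
  (forall b : {ffun V * 'I_n -> 'Z_N}, fourier (gzeta ev z mu) b != 0 ->
     (forall u, b u != 0 -> (2 <= #|hcomp ev z u|)%N) /\
     (forall u, (2 <= #|hcomp ev z u|)%N ->
        #|[set w in hcomp ev z u | b w != 0]| != 1%N)).
Proof.
split; first exact: part1.
move=> b fb; split.
  move=> u bu; rewrite leqNgt; apply: contra fb; rewrite ltnS => h.
  apply/eqP; apply: (single b u bu) => v vH vu.
  have uH : u \in hcomp ev z u by rewrite inE connect0.
  by move: vu; rewrite (card_le1_eqP h v u vH uH) eqxx.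
move=> u _; apply/negP => /cards1P [w Hw].
have : w \in [set w0 in hcomp ev z u | b w0 != 0] by rewrite Hw set11.
rewrite inE => /andP [wcu bw].
apply: (negP fb); apply/eqP; apply: (single b w bw) => v vH vw.
apply/eqP; apply: contraTT vw => bv; rewrite negbK.
have vin : v \in [set w0 in hcomp ev z u | b w0 != 0].
  rewrite inE bv andbT; rewrite inE in wcu; rewrite inE in vH; rewrite inE.
  exact: connect_trans wcu vH.
by rewrite Hw inE in vin.
Qed.

End Main.

Theorem lemma6p3 (C : numClosedFieldType) (V E : finType) (k n K N : nat)
  (alpha : C) (ev : E -> k.-tuple V) (mu : E -> {ffun 'I_k -> 'Z_N} -> C)
  (z : E -> 'I_K -> {ffun 'I_k -> 'I_n} -> option {ffun 'I_k -> 'Z_N}) :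
  (1 < N)%N ->
  (forall e, uniq (ev e)) ->
  dist_labeled mu ->
  alpha \is Num.real ->
  is_restriction_seq ev z alpha ->
  ~~ cyclic ev z ->
  expect (gzeta ev z mu) = 1 /\
  (forall b : {ffun V * 'I_n -> 'Z_N}, fourier (gzeta ev z mu) b != 0 ->
     (forall u, b u != 0 -> (2 <= #|hcomp ev z u|)%N) /\
     (forall u, (2 <= #|hcomp ev z u|)%N ->
        #|[set w in hcomp ev z u | b w != 0]| != 1%N)).
Proof.
move=> N1 evu dl _ _ ncyc.
exact: main_sec N1 evu dl ncyc.
Qed.
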